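(* For every $n>3$, let $G_n$ be the directed graph with nodes $0,\dots,n-1$ and arcs $i\to i+1$ for $0\le i\le n-2$, $j\to 0$ for $1\le j\le n-1$, and $0\to n-1$. Then $G_n$ is strongly connected and $R(G_n)=1/3$.
   Context: $d_G(x,y)$ is the shortest directed path length from $x$ to $y$ ($\infty$ if none). The distance-count matrix $C_G\in\mathbb{R}^{n\times n}$ has $(C_G)_{i,k}=|\{j: d_G(j,i)=k\}|$. For $\mathbf a\in\mathbb{R}^{\mathbb{N}}$ (with $a_0$ arbitrary) the linear centrality is $f^{\mathbf a}_G(i)=\sum_{k=0}^{n-1}(C_G)_{i,k}a_k$. A permutation $\pi$ of $\{0,\dots,n-1\}$ is representable by $G$ if there is $\mathbf a$ with $f^{\mathbf a}_G(\pi(0))>\dots>f^{\mathbf a}_G(\pi(n-1))$. $R(G)=|\{\pi\in S_n:\pi\text{ representable by }G\}|/n!$. *)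

(* Defs.v *)
From Stdlib Require Import Rdefinitions.
From HB Require Import structures.
From mathcomp Require Import all_boot all_order all_algebra all_fingroup.
From mathcomp Require Import boolp.
From mathcomp Require Import Rstruct.
Set Implicit Arguments. Unset Strict Implicit. Unset Printing Implicit Defensive.
Import Order.TTheory GRing.Theory Num.Theory.
Local Open Scope ring_scope.

Fixpoint walk (n : nat) (e : rel 'I_n) (k : nat) (x y : 'I_n) : bool :=
  if k is k'.+1 then [exists z, e x z && walk e k' z y] else x == y.

Definition dist_is (n : nat) (e : rel 'I_n) (x y : 'I_n) (k : nat) : bool :=
  walk e k x y && [forall m : 'I_k, ~~ walk e m x y].

Definition Cmat (n : nat) (e : rel 'I_n) (i : 'I_n) (k : nat) : nat :=
  #|[set j : 'I_n | dist_is e j i k]|.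

Definition lin_centrality (n : nat) (e : rel 'I_n) (a : nat -> R) (i : 'I_n) : R :=
  \sum_(k < n) (Cmat e i k)%:R * a k.

Definition representable (n : nat) (e : rel 'I_n) (pi : 'S_n) : Prop :=
  exists a : nat -> R,
    forall i j : 'I_n, val j = (val i).+1 ->
      lin_centrality e a (pi j) < lin_centrality e a (pi i).

Definition Rratio (n : nat) (e : rel 'I_n) : R :=
  (#|[set pi : 'S_n | `[< representable e pi >]]|)%:R / (n`!)%:R.

Definition strongly_connected (n : nat) (e : rel 'I_n) : Prop :=
  forall x y : 'I_n, connect e x y.

Definition Gn (n : nat) : rel 'I_n :=
  fun i j =>
    [|| val j == (val i).+1,
        (val j == 0%N) && (val i != 0%N)
      | (val i == 0%N) && (val j == n.-1)].
Arguments Gn n : clear implicits.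

(* Main.v *)
Require Import Defs.
From Stdlib Require Import Rdefinitions.
From HB Require Import structures.
From mathcomp Require Import all_boot all_order all_algebra all_fingroup.
From mathcomp Require Import boolp Rstruct.
From mathcomp Require Import zify ring lra.
Import Order.TTheory GRing.Theory Num.Theory.
Set Implicit Arguments. Unset Strict Implicit.
Local Open Scope ring_scope.



Ltac fixb := repeat match goal with H : _ = false |- _ => move/negbT: H => H end.
Ltac dsolve := simpl in *; do !(case: ifP => ?); fixb; lia.

Definition Dn (m j i : nat) : nat :=
  if i == m.+3 then (if j == m.+3 then 0 else if (j == m.+2) || (j == 0) then 1 else 2)%N
  else if (j <= i)%N then (i - j)%N else i.+1.

Definition D (m : nat) (j i : 'I_m.+4) : nat := Dn m (nat_of_ord j) (nat_of_ord i).
Arguments D {m}.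

Lemma D0 m (j i : 'I_m.+4) : D j i = 0%N -> j = i.
Proof.
rewrite /D /Dn => h; apply/val_inj => /=; move: h (ltn_ord j) (ltn_ord i).
dsolve.
Qed.

Lemma Dii m (i : 'I_m.+4) : D i i = 0%N.
Proof. rewrite /D /Dn; move: (ltn_ord i); by dsolve. Qed.

Lemma Dlt m (j i : 'I_m.+4) : (D j i < m.+4)%N.
Proof. rewrite /D /Dn; move: (ltn_ord i) (ltn_ord j); by dsolve. Qed.

Lemma Darc m (j z i : 'I_m.+4) : Gn m.+4 j z -> (D j i <= (D z i).+1)%N.
Proof.
rewrite /D /Dn /Gn /=; move: (ltn_ord i) (ltn_ord j) (ltn_ord z).
by dsolve.
Qed.

Lemma Dstep m (j i : 'I_m.+4) : j != i ->
  exists z : 'I_m.+4, Gn m.+4 j z /\ (D z i).+1 = D j i.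
Proof.
move=> /eqP hji.
have hj := ltn_ord j; have hi := ltn_ord i.
have hne : val j <> val i by move=> h; apply: hji; apply: val_inj.
have z0 : (0 < m.+4)%N by [].
have zm : (m.+3 < m.+4)%N by [].
case: (boolP (val i == m.+3)) => him.
  case: (boolP ((val j == m.+2) || (val j == 0%N))) => hj2.
    exists (Ordinal zm); rewrite /D /Dn /Gn /=; move: hj2 him hne; by dsolve.
  exists (Ordinal z0); rewrite /D /Dn /Gn /=; move: hj2 him hne; by dsolve.
case: (ltnP (val j) (val i)) => hl.
  have hz : ((val j).+1 < m.+4)%N by simpl in *; lia.
  exists (Ordinal hz); rewrite /D /Dn /Gn /=; move: hl him hne; by dsolve.
exists (Ordinal z0); rewrite /D /Dn /Gn /=; move: hl him hne; by dsolve.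
Qed.

Lemma walk_ge m (i : 'I_m.+4) k (j : 'I_m.+4) : walk (Gn m.+4) k j i -> (D j i <= k)%N.
Proof.
elim: k j => [|k IH] j /=.
  by move=> /eqP ->; rewrite Dii.
move=> /existsP [z /andP [hz hw]].
have := @Darc _ j z i hz; have := IH _ hw; lia.
Qed.

Lemma walk_D m (i : 'I_m.+4) k (j : 'I_m.+4) : D j i = k -> walk (Gn m.+4) k j i.
Proof.
elim: k j => [|k IH] j /=.
  by move=> /D0 ->.
move=> hD; have hji : j != i by apply/eqP => h; move: hD; rewrite h Dii.
have [z [hz hzD]] := @Dstep _ _ _ hji.
apply/existsP; exists z; rewrite hz /=; apply: IH; lia.
Qed.

Lemma distE m (j i : 'I_m.+4) k : dist_is (Gn m.+4) j i k = (k == D j i).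
Proof.
apply/idP/idP.
  move=> /andP [hw /forallP hf].
  have hle := walk_ge hw.
  case: (ltnP (D j i) k) => h; last by apply/eqP; lia.
  have := hf (Ordinal h); rewrite (walk_D (erefl _)) //.
move=> /eqP ->; apply/andP; split; first exact: walk_D.
apply/forallP => x; apply/negP => hw; have := walk_ge hw; have := ltn_ord x; lia.
Qed.

Lemma walk_connect n (e : rel 'I_n) k x y : walk e k x y -> connect e x y.
Proof.
elim: k x => [|k IH] x /=; first by move=> /eqP ->.
move=> /existsP [z /andP [hz hw]].
exact: connect_trans (connect1 hz) (IH _ hw).
Qed.

Lemma sc m : strongly_connected (Gn m.+4).
Proof. move=> x y; exact: (walk_connect (@walk_D _ _ _ _ (erefl _))). Qed.

Lemma fE m (a : nat -> R) (i : 'I_m.+4) :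
  lin_centrality (Gn m.+4) a i = \sum_(j < m.+4) a (D j i).
Proof.
rewrite /lin_centrality /Cmat.
under eq_bigr => k _ do rewrite mulr_natl -sumr_const big_mkcond /=.
rewrite exchange_big /=; apply: eq_bigr => j _.
rewrite (bigD1 (Ordinal (Dlt j i))) //= inE distE eqxx big1 ?addr0 // => k hk.
rewrite inE distE; case: eqP => // hk2; move: hk; case/negP; apply/eqP/val_inj => /=.
by rewrite hk2.
Qed.

Lemma fgen m (a : nat -> R) (i : 'I_m.+4) : nat_of_ord i != m.+3 ->
  \sum_(j < m.+4) a (D j i) = \sum_(0 <= k < i.+1) a k + (m.+3 - i)%:R * a i.+1.
Proof.
move=> hi; have hi' := ltn_ord i.
rewrite /D -(big_mkord xpredT (fun j => a (Dn m j i))).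
rewrite (big_cat_nat _ (n:=i.+1)) //=.
congr (_ + _).
  rewrite big_nat_rev /=; apply: eq_big_nat => j hj.
  rewrite /Dn (negbTE hi) ifT; last by lia.
  congr a; lia.
rewrite (eq_big_nat _ _ (F2 := fun _ => a i.+1)); last first.
  move=> j hj; rewrite /Dn (negbTE hi) ifF //; lia.
rewrite sumr_const_nat mulr_natl; congr (_ *+ _). Show.
Qed.

Lemma fmax m (a : nat -> R) :
  \sum_(j < m.+4) a (D j ord_max) = a 0%N + a 1%N *+ 2 + a 2%N *+ m.+1.
Proof.
rewrite /D -(big_mkord xpredT (fun j => a (Dn m j m.+3))).
rewrite big_nat_recr //= big_nat_recr //= big_ltn //=.
rewrite (eq_big_nat _ _ (F2 := fun _ => a 2%N)); last first.
  move=> j hj; rewrite /Dn eqxx; case: ifP; first lia.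
  case: ifP => //; lia.
rewrite sumr_const_nat /Dn /= !eqxx /=.
have -> : (m.+2 == m.+3) = false by lia.
have -> : (m.+2 - 1 = m.+1)%N by lia.
by rewrite mulr2n; ring.
Qed.

Definition F m (a : nat -> R) (v : 'I_m.+4) := \sum_(j < m.+4) a (D j v).
Definition o1 m : 'I_m.+4 := @Ordinal m.+4 1 isT.

Lemma frel m (a : nat -> R) :
  (m.+2)%:R * F a (@ord_max m.+3) = F a (@ord0 m.+3) + (m.+1)%:R * F a (o1 m).
Proof.
rewrite /F fmax !fgen; [|by []|by []].
have -> : nat_of_ord (@ord0 m.+3) = 0%N by [].
have -> : nat_of_ord (o1 m) = 1%N by [].
have s2 : \sum_(0 <= k < 2) a k = a 0%N + a 1%N by rewrite big_nat_recr // big_nat1.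
rewrite s2 big_nat1.
have -> : (m.+3 - 1 = m.+2)%N by lia.
have -> : (m.+3 - 0 = m.+3)%N by lia.
ring.
Qed.

Definition pos m (pi : {perm 'I_m.+4}) (v : 'I_m.+4) : nat := nat_of_ord ((pi^-1)%g v).
Definition mid m (pi : {perm 'I_m.+4}) (x y z : 'I_m.+4) : bool :=
  ((pos pi y < pos pi x) && (pos pi x < pos pi z))%N ||
  ((pos pi z < pos pi x) && (pos pi x < pos pi y))%N.

Lemma pos_inj m (pi : {perm 'I_m.+4}) x y : pos pi x = pos pi y -> x = y.
Proof. by move=> h; apply: (perm_inj (s := (pi^-1)%g)); apply: val_inj. Qed.

Lemma nec m (pi : {perm 'I_m.+4}) :
  representable (Gn m.+4) pi -> mid pi ord_max ord0 (o1 m).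
Proof.
case=> a H.
pose f (v : 'I_m.+4) := F a v.
have Hf : forall i j : 'I_m.+4, nat_of_ord j = (nat_of_ord i).+1 -> f (pi j) < f (pi i).
  by move=> i j hij; rewrite /f /F -!fE; apply: H.
have mono : forall k (u v : 'I_m.+4), nat_of_ord v = (u + k.+1)%N -> f (pi v) < f (pi u).
  elim=> [|k IH] u v huv; first by apply: Hf; lia.
  have hw : (u + k.+1 < m.+4)%N by have := ltn_ord v; lia.
  apply: (lt_trans (y := f (pi (Ordinal hw)))).
    by apply: Hf => /=; lia.
  by apply: IH.
have key : forall x y, (pos pi x < pos pi y)%N -> f y < f x.
  move=> x y hxy.
  have := mono (pos pi y - pos pi x).-1 ((pi^-1)%g x) ((pi^-1)%g y).
  rewrite !permKV; apply; rewrite /pos in hxy *; lia.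
have rel := frel m a.
rewrite -/(f _) -/(f _) -/(f _) in rel.
set c := (m.+1)%:R in rel.
have hc2 : (m.+2)%:R = c + 1 :> R by rewrite /c -addn1 natrD.
have hc : 0 < c by rewrite /c ltr0n.
rewrite hc2 in rel.
have n01 : ord0 != o1 m by [].
have n0M : ord0 != @ord_max m.+3 by [].
have n1M : o1 m != @ord_max m.+3 by [].
rewrite /mid.
case: (ltngtP (pos pi ord0) (pos pi ord_max)) => h1.
- have k1 := key _ _ h1.
  have hf1 : f (o1 m) < f ord_max by nra.
  case: (ltngtP (pos pi ord_max) (pos pi (o1 m))) => h2.
  + by move: h1 h2; lia.
  + have := key _ _ h2; lra.
  + by move: n1M; rewrite (pos_inj h2) eqxx.
- have k1 := key _ _ h1.
  have hf1 : f ord_max < f (o1 m) by nra.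
  case: (ltngtP (pos pi ord_max) (pos pi (o1 m))) => h2.
  + have := key _ _ h2; lra.
  + by move: h1 h2; lia.
  + by move: n1M; rewrite (pos_inj h2) eqxx.
- by move: n0M; rewrite (pos_inj h1) eqxx.
Qed.

Fixpoint Tf (m : nat) (g : nat -> R) (k : nat) : R :=
  if k is k'.+1 then Tf m g k' + (g k' - Tf m g k') / (m.+3 - k')%:R else 0.
Definition aT (m : nat) (g : nat -> R) (k : nat) : R :=
  if k is k'.+1 then Tf m g k - Tf m g k' else 0.

Lemma aTS m g k : aT m g k.+1 = Tf m g k + (g k - Tf m g k) / (m.+3 - k)%:R - Tf m g k.
Proof. by []. Qed.

Lemma sumT m g i : \sum_(0 <= k < i.+1) aT m g k = Tf m g i.
Proof.
elim: i => [|i IH]; first by rewrite big_nat1.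
rewrite big_nat_recr; last by [].
rewrite IH /=. rewrite addrC subrK. by [].
Qed.

Lemma F_g m g (v : 'I_m.+4) : nat_of_ord v != m.+3 -> F (aT m g) v = g v.
Proof.
move=> hv; rewrite /F fgen; last by [].
rewrite sumT aTS.
have hne : (m.+3 - v)%:R != 0 :> R.
  by rewrite pnatr_eq0; have := ltn_ord v; move: hv; lia.
move: hne; move: ((m.+3 - v)%:R) (Tf m g v) (g v) => c t x hc.
by rewrite (addrC t (_ / c)) addrK mulrC (divfK hc) addrC subrK.
Qed.

Lemma suf m (pi : {perm 'I_m.+4}) :
  mid pi ord_max ord0 (o1 m) -> representable (Gn m.+4) pi.
Proof.
move=> hmid.
pose q (v : 'I_m.+4) : R := (pos pi v)%:R.
pose c : R := (m.+1)%:R.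
pose b := (pos pi ord0 < pos pi ord_max)%N.
pose s1 := if b then c * (q (o1 m) - q ord_max) else q ord0 - q ord_max.
pose s2 := if b then q ord_max - q ord0 else c * (q ord_max - q (o1 m)).
pose h (x : R) := (q ord_max - x) * (if x <= q ord_max then s1 else s2).
have hc : 0 < c by rewrite /c ltr0n.
have facts : if b then q ord0 < q ord_max /\ q ord_max < q (o1 m)
             else q ord_max < q ord0 /\ q (o1 m) < q ord_max.
  rewrite /b /q !ltr_nat; move: hmid; rewrite /mid; case: ifP; lia.
have hs1 : 0 < s1.
  rewrite /s1; move: facts; case: ifP => hb; rewrite ?hb => -[r0 r1]; nra.
have hs2 : 0 < s2.
  rewrite /s2; move: facts; case: ifP => hb; rewrite ?hb => -[r0 r1]; nra.
have hdec : forall x y, x < y -> h y < h x.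
  move=> x y hxy; rewrite /h.
  case: (leP y (q ord_max)) => hy; case: (leP x (q ord_max)) => hx; nra.
have hsum : h (q ord0) + c * h (q (o1 m)) = 0.
  rewrite /h /s1 /s2; move: facts; case: ifP => hb; rewrite ?hb => -[r0 r1].
    case: (leP (q ord0) (q ord_max)) => h0; last lra.
    case: (leP (q (o1 m)) (q ord_max)) => h1; first lra.
    ring.
  case: (leP (q ord0) (q ord_max)) => h0; first lra.
  case: (leP (q (o1 m)) (q ord_max)) => h1; last lra.
  ring.
pose g k := h (q (inord k)).
have Fv : forall v, F (aT m g) v = h (q v).
  move=> v; case: (boolP (nat_of_ord v == m.+3)) => hv; last first.
    by rewrite F_g // /g inord_val.
  have -> : v = ord_max by apply: val_inj; apply/eqP.
  have rel := frel m (aT m g).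
  rewrite (@F_g m g ord0) // (@F_g m g (o1 m)) // /g !inord_val -/c hsum in rel.
  have -> : h (q ord_max) = 0 by rewrite /h subrr mul0r.
  have hc2 : (m.+2)%:R != 0 :> R by rewrite pnatr_eq0.
  by move/eqP: rel; rewrite mulf_eq0 (negbTE hc2) /= => /eqP.
exists (aT m g) => i j hij.
rewrite !fE; rewrite -/(F _ _) -/(F _ _) !Fv.
apply: hdec; rewrite /q /pos !permK ltr_nat; move: hij => /= hij; lia.
Qed.

Lemma posM m (pi t : {perm 'I_m.+4}) v : t = (t^-1)%g -> pos (pi * t)%g v = pos pi (t v).
Proof. by move=> ht; rewrite /pos invgM permM -ht. Qed.

Lemma cardS_sum (T : finType) (A : {set T}) : #|A| = \sum_(x : T) (x \in A : nat).
Proof. by rewrite -sum1_card big_mkcond. Qed.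

Lemma three (a b c : nat) : a != b -> a != c -> b != c ->
  (((b < a < c) || (c < a < b)) + ((a < b < c) || (c < b < a)) + ((b < c < a) || (a < c < b)) = 1)%N.
Proof.
move=> /negPf h1 /negPf h2 /negPf h3.
case: (ltngtP a b) h1 => // hab _; case: (ltngtP a c) h2 => // hac _;
  case: (ltngtP b c) h3 => // hbc _ /=; lia.
Qed.

Lemma count3 m :
  let S := [set pi : {perm 'I_m.+4} | mid pi ord_max ord0 (o1 m)] in
  (m.+4)`! = (3 * #|S|)%N.
Proof.
move=> S.
pose B := [set pi : {perm 'I_m.+4} | mid pi ord0 ord_max (o1 m)].
pose C := [set pi : {perm 'I_m.+4} | mid pi (o1 m) ord0 ord_max].
pose t0 := tperm (@ord0 m.+3) ord_max.
pose t1 := tperm (o1 m) (@ord_max m.+3).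
have n01 : ord0 != o1 m by [].
have n0M : ord0 != @ord_max m.+3 by [].
have n1M : o1 m != @ord_max m.+3 by [].
have hB : #|B| = #|S|.
  rewrite -(card_preimset S (can_inj (mulgK t0))); apply: eq_card => p.
  have ht : t0 = (t0^-1)%g by rewrite tpermV.
  rewrite !inE /mid !(fun v => @posM _ p _ v ht).
  by rewrite /t0 tpermL tpermR tpermD // eq_sym.
have hC : #|C| = #|S|.
  rewrite -(card_preimset S (can_inj (mulgK t1))); apply: eq_card => p.
  have ht : t1 = (t1^-1)%g by rewrite tpermV.
  rewrite !inE /mid !(fun v => @posM _ p _ v ht).
  by rewrite /t1 tpermL tpermR tpermD // eq_sym.
have hsum : forall pi, ((pi \in S) + (pi \in B) + (pi \in C))%N = 1%N.
  move=> pi; rewrite !inE /mid.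
  have d1 : pos pi ord0 != pos pi (o1 m) by apply/eqP => /pos_inj /eqP; rewrite (negbTE n01).
  have d2 : pos pi ord0 != pos pi ord_max by apply/eqP => /pos_inj /eqP; rewrite (negbTE n0M).
  have d3 : pos pi (o1 m) != pos pi ord_max by apply/eqP => /pos_inj /eqP; rewrite (negbTE n1M).
  by apply: three; rewrite // eq_sym.
rewrite -card_Sn -cardsT cardS_sum.
rewrite (eq_bigr (fun pi => ((pi \in S) + (pi \in B) + (pi \in C))%N)); last first.
  by move=> pi _; rewrite hsum inE.
rewrite !big_split /= -!cardS_sum hB hC.
by rewrite !mulSn mul0n addn0 addnA.
Qed.

Unset Implicit Arguments.

Theorem corollary5 (n : nat) (hn : (3 < n)%N) :
  strongly_connected (Gn n) /\ Rratio (Gn n) = 3%:R^-1.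
Proof.
case: n hn => [|[|[|[|m]]]] // _.
split; first exact: sc.
rewrite /Rratio.
set S := [set pi : {perm 'I_m.+4} | mid pi ord_max ord0 (o1 m)].
have -> : [set pi : 'S_m.+4 | `[< representable (Gn m.+4) pi >]] = S.
  apply/setP => pi; rewrite !inE; apply/asboolP/idP; [exact: nec | exact: suf].
rewrite (count3 m) -/S natrM.
have hS : (#|S|%:R : R) != 0.
  rewrite pnatr_eq0; apply/eqP => h0; have := fact_gt0 m.+4; rewrite (count3 m) -/S h0.
  by [].
move: hS; move: (#|S|%:R : R) => x hx.
have e : x / (3%:R * x) = 3%:R^-1 :> R by rewrite invfM mulrCA divff // mulr1.
exact: e.
Qed.
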